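(* Let $f$ be an L-additive arithmetic function whose associated completely multiplicative function $h_f$ is nonzero-valued. For an arithmetic function $g$ define its derivative $g'$ by $g'(n)=\frac{g(n)f(n)}{h_f(n)}$ for $n\geq1$. Then for all arithmetic functions $g$ and $h$: (a) $(g+h)'(n)=g'(n)+h'(n)$ for all $n\geq 1$; (b) $(g\ast h)'(n)=(g'\ast h)(n)+(g\ast h')(n)$ for all $n\geq 1$.
   Context: An arithmetic function $f:\mathbb{N}\to\mathbb{C}$ is L-additive if there is a completely multiplicative function $h_f$ such that $f(mn)=f(m)h_f(n)+f(n)h_f(m)$ for all positive integers $m,n$; such an $h_f$ is fixed. $\ast$ is Dirichlet convolution $(F\ast G)(n)=\sum_{d\mid n}F(d)G(n/d)$. *)

(* Defs.v *)
From HB Require Import structures.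
From mathcomp Require Import all_boot all_order all_algebra.
From mathcomp Require Import complex.
From mathcomp Require Import Rstruct.
Set Implicit Arguments. Unset Strict Implicit. Unset Printing Implicit Defensive.
Import Order.TTheory GRing.Theory Num.Theory.
Local Open Scope ring_scope.

Definition Cx : Type := complex.complex Rdefinitions.R.
Definition Cfield : fieldType := Cx.

(* Arithmetic functions N -> C; only values at n >= 1 are meaningful. *)
Definition arith := nat -> Cfield.

Definition completely_multiplicative (h : arith) : Prop :=
  h 1%N = 1 /\ forall m n : nat, (0 < m)%N -> (0 < n)%N -> h (m * n)%N = h m * h n.

Definition L_additive_wrt (f h : arith) : Prop :=
  completely_multiplicative h /\
  forall m n : nat, (0 < m)%N -> (0 < n)%N ->
    f (m * n)%N = f m * h n + f n * h m.

Definition dconv (F G : arith) : arith :=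
  fun n => \sum_(d <- divisors n) F d * G (n %/ d)%N.

Definition arith_add (F G : arith) : arith := fun n => F n + G n.

Definition deriv_f (f hf g : arith) : arith := fun n => g n * f n / hf n.

(* Main.v *)
Require Import Defs.
From mathcomp Require Import all_boot all_order all_algebra.
From mathcomp Require Import ring.
Import GRing.Theory.
Local Open Scope ring_scope.

Lemma aux (a b c e x y : Cfield) : x != 0 -> y != 0 ->
  a * b * (c * y + e * x) / (x * y) = a * c / x * b + a * (b * e / y).
Proof. move=> hx hy. field. by rewrite hx hy. Qed.

Theorem theorem2p7 (f hf : arith)
  (Hf : L_additive_wrt f hf)
  (Hnz : forall n : nat, (0 < n)%N -> hf n != 0) :
  forall g h : arith,
    (forall n : nat, (0 < n)%N ->
       deriv_f f hf (arith_add g h) n = arith_add (deriv_f f hf g) (deriv_f f hf h) n) /\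
    (forall n : nat, (0 < n)%N ->
       deriv_f f hf (dconv g h) n =
       dconv (deriv_f f hf g) h n + dconv g (deriv_f f hf h) n).
Proof.
move=> g h; split=> n n0.
  by rewrite /deriv_f /arith_add mulrDl mulrDl.
case: Hf => [[_ Hm] Ha].
rewrite /deriv_f /dconv -big_split /= !mulr_suml.
apply: eq_big_seq => d; rewrite -dvdn_divisors // => dn.
have d0 : (0 < d)%N by apply: dvdn_gt0 n0 dn.
have e0 : (0 < n %/ d)%N by rewrite divn_gt0 // dvdn_leq.
have En : n = (d * (n %/ d))%N by rewrite mulnC divnK.
have hd := Hnz d d0; have he := Hnz _ e0.
rewrite [in f n]En [in hf n]En Ha // Hm //.
exact: (aux (g d) (h (n %/ d)%N) (f d) (f (n %/ d)%N) (hf d) (hf (n %/ d)%N) hd he).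
Qed.
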